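(* Let $R\subseteq\mathbb N$ be a congruence-periodic sparse predicate, $d\in\mathbb N^+$, $\tilde R\subseteq^dR$, $n\in\mathbb N^+$, and $\mathbf A,\mathbf B$ $n$-tuples of operators on $R$. Then there is $\Delta_0$ such that for every $\Delta\in d\mathbb N$ with $\Delta\ge\Delta_0$ the following holds. For all $x,y_1,y_2\in\mathbb Z$, $u_1,\dots,u_n\in\tilde R\cup\{-\infty\}$ and $v_1,\dots,v_n\in\tilde R\cup\{+\infty\}$, if there is $z\in\tilde R^n_\Delta$ with $$y_1+\mathbf A\cdot z<x<y_2+\mathbf B\cdot z\ \wedge\ \bigwedge_{i=1}^nu_i\le z_i\le v_i\qquad(\dagger)$$ then either $v_1=+\infty$ and ($A_1=_R0$ and $B_1>_R0$, or $A_1<_R0$ and $B_1=_R0$), or there is $z\in\tilde R^n_\Delta$ satisfying $(\dagger)$ and one of: (i) $z_i=\sigma^\Delta z_{i+1}$ for some $1\le i\le n$ (with $z_{n+1}:=\min\tilde R$); (ii) $z_i\in\{u_i,v_i\}$ for some $1\le i\le n$; (iii) all $A_i,B_i$ are $\neq_R0$, and $z=P_\Delta(x-y_1;\mathbf A,\tilde R)$ or $z=P_\Delta(y_2-x;-\mathbf B,\tilde R)$.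
   Context: Let $R\subseteq\mathbb N$ be infinite, enumerated increasingly as $(r_n)_{n\in\mathbb N}$; $\sigma:R\to R$ is the successor map, $\sigma^k$ its iterate ($\sigma^0=\mathrm{id}$). An operator on $R$ is a function $R\to\mathbb Z$, $z\mapsto\sum_{i=0}^ma_i\sigma^i(z)$, $a_i\in\mathbb Z$. $A=_R0$ means $Az=0$ for all $z\in R$; $A>_R0$ (resp. $<_R0$) means $Az>0$ (resp. $<0$) for all but finitely many $z$. $R$ is sparse if every operator $A$ satisfies (S1) $A=_R0$ or $A>_R0$ or $A<_R0$, and (S2) if $A>_R0$ there is $\Delta$ with $A(\sigma^\Delta z)>z$ for all $z\in R$. Congruence-periodic: for each $m\in\mathbb N^+$, $(r_n\bmod m)$ is eventually periodic. $\tilde R\subseteq^dR$ means $\tilde R=\{r_{N+dt}:t\in\mathbb N\}$ for some $N\in\mathbb N$. $\mathbf A\cdot z=\sum A_iz_i$; $\mathbf A\cdot S=\{\mathbf A\cdot z:z\in S\}$; $-\mathbf B=(-B_1,\dots,-B_n)$. $\tilde R^n_\Delta=\{z\in\tilde R^n:z_i\ge\sigma^\Delta z_{i+1}\ (1\le i\le n)\}$ with $z_{n+1}:=\min\tilde R$. For $\mathbf A$ with all entries $\neq_R0$ and $\Delta$ large enough that $z\mapsto\mathbf A\cdot z$ is injective on $R^n_\Delta$: $\min_{\mathbf A}S$/$\max_{\mathbf A}S$ is the unique $z\in S$ minimising/maximising $\mathbf A\cdot z$ (when bounded), and $P_\Delta(x;\mathbf A,\tilde R)=\max_{\mathbf A}\{z\in\tilde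 R^n_\Delta:\mathbf A\cdot z<x\}$ if $x>\inf\mathbf A\cdot\tilde R^n_\Delta$, and $\min_{\mathbf A}\tilde R^n_\Delta$ otherwise. *)

(* Defs.v *)
From mathcomp Require Import all_boot all_order all_algebra.
Set Implicit Arguments. Unset Strict Implicit. Unset Printing Implicit Defensive.
Import Order.TTheory GRing.Theory Num.Theory.
Local Open Scope ring_scope.

(* R is given by its increasing enumeration r : nat -> nat (R = range r).
   An element of R is r k; sigma^j (r k) = r (k + j).
   An operator sum_{i<=m} a_i sigma^i is its coefficient list a = [a_0;...;a_m]. *)
Definition op := seq int.

Definition strictly_increasing (r : nat -> nat) : Prop := forall k, (r k < r k.+1)%N.

Definition opv (r : nat -> nat) (a : op) (k : nat) : int :=
  \sum_(i < size a) a`_i * ((r (k + i)%N)%:Z).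

Definition op_eq0 r (a : op) : Prop := forall k, opv r a k = 0.
Definition op_pos r (a : op) : Prop := exists K, forall k, (K <= k)%N -> 0 < opv r a k.
Definition op_neg r (a : op) : Prop := exists K, forall k, (K <= k)%N -> opv r a k < 0.

Definition sparse (r : nat -> nat) : Prop :=
  forall a : op,
    (op_eq0 r a \/ op_pos r a \/ op_neg r a) /\
    (op_pos r a -> exists D : nat, forall k, (r k)%:Z < opv r a (k + D)%N).

Definition congruence_periodic (r : nat -> nat) : Prop :=
  forall m : nat, (0 < m)%N ->
    exists p K : nat, (0 < p)%N /\ forall k, (K <= k)%N -> (r (k + p) %% m = r k %% m)%N.

Definition opp_op (a : op) : op := map (fun c => - c) a.

(* tuples are functions nat -> _, only indices 0..n-1 matter (paper's 1..n) *)
Definition dot r (n : nat) (A : nat -> op) (z : nat -> nat) : int :=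
  \sum_(i < n) opv r (A i) (z i).

(* tilde R = { r_(N + d t) : t } ; membership of an index, resp. of an element *)
Definition inRt_idx (N d k : nat) : Prop := exists t, k = (N + d * t)%N.
Definition inRt_elt r (N d e : nat) : Prop := exists t, e = r (N + d * t)%N.

(* z (given by indices z i, i.e. z_i = r (z i)) lies in tilde R^n_Delta,
   with z_{n+1} := min tilde R = r N *)
Definition inRnD r (N d Delta n : nat) (z : nat -> nat) : Prop :=
  forall i, (i < n)%N ->
    inRt_idx N d (z i) /\
    (r ((if i.+1 == n then N else z i.+1) + Delta)%N <= r (z i))%N.

Definition lbnd (u : option nat) (e : nat) : Prop :=
  match u with None => True | Some a => (a <= e)%N end.
Definition ubnd (v : option nat) (e : nat) : Prop :=
  match v with None => True | Some b => (e <= b)%N end.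

Definition dagger r n (A B : nat -> op) (x y1 y2 : int)
  (u : nat -> option nat) (v : nat -> option nat) (z : nat -> nat) : Prop :=
  y1 + dot r n A z < x /\ x < y2 + dot r n B z /\
  forall i, (i < n)%N -> lbnd (u i) (r (z i)) /\ ubnd (v i) (r (z i)).

Definition dot_inj r (Delta n : nat) (A : nat -> op) : Prop :=
  forall z w, inRnD r 0 1 Delta n z -> inRnD r 0 1 Delta n w ->
    dot r n A z = dot r n A w -> forall i, (i < n)%N -> z i = w i.

(* z = P_Delta(x; A, tilde R) (characterisation; unique when dot_inj holds) *)
Definition isP r (N d Delta n : nat) (A : nat -> op) (x : int) (z : nat -> nat) : Prop :=
  inRnD r N d Delta n z /\
  ((exists w, inRnD r N d Delta n w /\ dot r n A w < x) ->
     dot r n A z < x /\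
     forall w, inRnD r N d Delta n w -> dot r n A w < x -> dot r n A w <= dot r n A z) /\
  (~ (exists w, inRnD r N d Delta n w /\ dot r n A w < x) ->
     forall w, inRnD r N d Delta n w -> dot r n A z <= dot r n A w).

(* Main.v *)
Require Import Defs.
Require Import Defs.
From Stdlib Require Import Classical FunctionalExtensionality.
From mathcomp Require Import all_boot all_order all_algebra zify ring.
Import Order.TTheory GRing.Theory Num.Theory.
Set Implicit Arguments. Unset Strict Implicit. Unset Printing Implicit Defensive.
Local Open Scope ring_scope.

Section Basic.
Variable r : nat -> nat.
Hypothesis hr : strictly_increasing r.

Lemma r_lt a b : (a < b)%N -> (r a < r b)%N.
Proof.
move=> hab; elim: b hab => // b IH; rewrite ltnS leq_eqVlt => /orP [/eqP -> | /IH h].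
  exact: hr.
exact: ltn_trans h (hr b).
Qed.

Lemma r_leE a b : (r a <= r b)%N = (a <= b)%N.
Proof.
case: (leqP a b) => h.
  move: h; rewrite leq_eqVlt => /orP [/eqP -> | h]; first exact: leqnn.
  exact: (ltnW (r_lt h)).
apply/negbTE; rewrite -ltnNge; exact: (@r_lt b a h).
Qed.

Lemma r_ltE a b : (r a < r b)%N = (a < b)%N.
Proof. by rewrite !ltnNge r_leE. Qed.

Lemma r_inj a b : r a = r b -> a = b.
Proof. by move=> h; apply/eqP; rewrite eqn_leq -(r_leE a b) -(r_leE b a) h leqnn. Qed.

Lemma r_ge k : (k <= r k)%N.
Proof. elim: k => // k IH; exact: leq_ltn_trans IH (hr k). Qed.

End Basic.

Lemma opv_ext r (a : op) m k : (size a <= m)%N ->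
  opv r a k = \sum_(i < m) a`_i * (r (k + i)%N)%:Z.
Proof.
move=> hm; rewrite /opv (big_ord_widen m (fun i => a`_i * (r (k + i)%N)%:Z) hm).
rewrite big_mkcond /=; apply: eq_bigr => i _.
by case: ifP => // /negbT; rewrite -leqNgt => h; rewrite nth_default // mul0r.
Qed.

Lemma opv_opp r a k : opv r (opp_op a) k = - opv r a k.
Proof.
rewrite /opv /opp_op size_map -sumrN; apply: eq_bigr => i _.
by rewrite (nth_map 0) // mulNr.
Qed.

Definition op_sub (p q : op) : op :=
  mkseq (fun i => p`_i - q`_i) (maxn (size p) (size q)).

Lemma opv_sub r p q k : opv r (op_sub p q) k = opv r p k - opv r q k.
Proof.
rewrite (@opv_ext r p (maxn (size p) (size q)) k) ?leq_maxl //.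
rewrite (@opv_ext r q (maxn (size p) (size q)) k) ?leq_maxr //.
rewrite /opv /op_sub size_mkseq -sumrB; apply: eq_bigr => i _.
by rewrite nth_mkseq // mulrBl.
Qed.

Lemma opv_cons0 r (a : op) k : opv r (0 :: a) k = opv r a k.+1.
Proof.
rewrite /opv /= big_ord_recl /= mul0r add0r; apply: eq_bigr => i _.
by rewrite /bump /= addSn addnS.
Qed.

Definition dop (a : op) : op := op_sub (0 :: a) a.

Lemma opv_dop r a k : opv r (dop a) k = opv r a k.+1 - opv r a k.
Proof. by rewrite /dop opv_sub opv_cons0. Qed.

Definition csum (a : op) : int := \sum_(i < size a) `|a`_i|.

Lemma csum_ge0 a : 0 <= csum a.
Proof. by apply: sumr_ge0 => i _; rewrite normr_ge0. Qed.

Lemma opv_bound r (hr : strictly_increasing r) a k m : (size a <= m)%N ->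
  `|opv r a k| <= csum a * (r (k + m)%N)%:Z.
Proof.
move=> hm; rewrite /csum mulr_suml; apply: le_trans (ler_norm_sum _ _ _) _.
apply: ler_sum => i _; rewrite normrM ler_wpM2l ?normr_ge0 //.
rewrite ger0_norm // lez_nat r_leE // leq_add2l.
exact: leq_trans (ltnW (ltn_ord i)) hm.
Qed.
Section Anal.
Variable r : nat -> nat.
Hypothesis hr : strictly_increasing r.
Hypothesis hsp : sparse r.

Lemma pos_opp a : op_neg r a -> op_pos r (opp_op a).
Proof. by case=> K hK; exists K => k hk; rewrite opv_opp oppr_gt0 hK. Qed.

Lemma unbounded_pos a : op_pos r a -> forall (c : int) K0, exists k, (K0 <= k)%N /\ c < opv r a k.
Proof.
move=> hp c K0; have [_ /(_ hp) [D hD]] := hsp a.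
exists ((`|c|%N + K0) + D)%N; split; first by lia.
apply: le_lt_trans (hD _).
apply: le_trans (ler_norm c) _; rewrite -[`|c|]abszE lez_nat.
exact: leq_trans (leq_addr K0 _) (r_ge hr _).
Qed.

Lemma nz_cases a : ~ op_eq0 r a -> op_pos r a \/ op_neg r a.
Proof. by have [[h|h] _] := hsp a. Qed.

Lemma incr_from a K : (forall k, (K <= k)%N -> opv r a k < opv r a k.+1) ->
  forall k k', (K <= k)%N -> (k < k')%N -> opv r a k < opv r a k'.
Proof.
move=> h k k' hk; elim: k' => // k' IH; rewrite ltnS leq_eqVlt => /orP [/eqP <-|hl].
  exact: h.
apply: lt_trans (IH hl) (h _ _); exact: leq_trans hk (ltnW hl).
Qed.

Lemma dop_nz a : ~ op_eq0 r a -> ~ op_eq0 r (dop a).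
Proof.
move=> ha h0.
have hc : forall k, opv r a k = opv r a 0.
  elim=> // k IH; move: (h0 k); rewrite opv_dop => /eqP; rewrite subr_eq0 => /eqP ->.
  exact: IH.
case: (nz_cases ha) => hp.
  have [k [_ hk]] := unbounded_pos hp (opv r a 0) 0.
  by rewrite hc ltxx in hk.
have [k [_ hk]] := unbounded_pos (pos_opp hp) (- opv r a 0) 0.
by rewrite opv_opp hc ltxx in hk.
Qed.

Lemma mono_op a : ~ op_eq0 r a -> exists K,
  (op_pos r a /\ forall k k', (K <= k)%N -> (k < k')%N -> opv r a k < opv r a k') \/
  (op_neg r a /\ forall k k', (K <= k)%N -> (k < k')%N -> opv r a k' < opv r a k).
Proof.
move=> ha; have hb := dop_nz ha.
case: (nz_cases hb) => [[K hK]|[K hK]]; exists K.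
- have hinc : forall k k', (K <= k)%N -> (k < k')%N -> opv r a k < opv r a k'.
    apply: incr_from => k hk; move: (hK k hk); rewrite opv_dop subr_gt0 //.
  left; split => //; case: (nz_cases ha) => // hn.
  have [k [hk1 hk2]] := unbounded_pos (pos_opp hn) (- opv r a K) K.
  rewrite opv_opp ltrN2 in hk2; move: hk1; rewrite leq_eqVlt => /orP [/eqP e|hl].
    by rewrite e ltxx in hk2.
  by have := lt_trans hk2 (hinc _ _ (leqnn K) hl); rewrite ltxx.
- have hinc : forall k k', (K <= k)%N -> (k < k')%N -> opv r (opp_op a) k < opv r (opp_op a) k'.
    apply: incr_from => k hk; move: (hK k hk); rewrite opv_dop !opv_opp subr_lt0 ltrN2 //.
  right; split; last first.
    by move=> k k' hk hk'; move: (hinc k k' hk hk'); rewrite !opv_opp ltrN2.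
  case: (nz_cases ha) => // hn.
  have [k [hk1 hk2]] := unbounded_pos hn (opv r a K) K.
  move: hk1; rewrite leq_eqVlt => /orP [/eqP e|hl].
    by rewrite e ltxx in hk2.
  move: (hinc _ _ (leqnn K) hl); rewrite !opv_opp ltrN2 => h.
  by have := lt_trans hk2 h; rewrite ltxx.
Qed.
Lemma step_grow a : ~ op_eq0 r a -> exists D, forall j,
  (r j)%:Z < `|opv r a (j + D)%N.+1 - opv r a (j + D)%N|.
Proof.
move=> ha; have hb := dop_nz ha.
case: (nz_cases hb) => hp.
  have [_ /(_ hp) [D hD]] := hsp (dop a); exists D => j.
  apply: lt_le_trans (hD j) _; rewrite opv_dop; exact: ler_norm.
have [_ /(_ (pos_opp hp)) [D hD]] := hsp (opp_op (dop a)); exists D => j.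
apply: lt_le_trans (hD j) _; rewrite opv_opp opv_dop -normrN; exact: ler_norm.
Qed.

Lemma growth : exists D, forall k t, (2 ^ t * r k <= r (k + t * D))%N.
Proof.
pose a : op := [:: -1; 1].
have ha : forall k, opv r a k = (r k.+1)%:Z - (r k)%:Z.
  move=> k; rewrite /opv /= big_ord_recl big_ord_recl big_ord0 /= /bump /=.
  by rewrite addn0 addn1 addr0 mulN1r mul1r addrC.
have hp : op_pos r a.
  by exists 0%N => k _; rewrite ha subr_gt0 ltz_nat hr.
have [_ /(_ hp) [D hD]] := hsp a.
exists D.+1 => k t; elim: t k => [|t IH] k; first by rewrite expn0 mul1n addn0.
have h2 : forall j, (2 * r j <= r (j + D.+1))%N.
  move=> j; move: (hD j); rewrite ha -addnS => h.
  have h3 : (r j + r (j + D) < r (j + D.+1))%N.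
    lia.
  have h4 : (r j <= r (j + D))%N by rewrite r_leE // leq_addr.
  lia.
rewrite expnS -mulnA; apply: leq_trans (leq_mul (leqnn 2) (IH k)) _.
apply: leq_trans (h2 _) _; rewrite r_leE //; lia.
Qed.
End Anal.
Section Dom.
Variable r : nat -> nat.
Hypothesis hr : strictly_increasing r.
Hypothesis hsp : sparse r.

Lemma dom_thr a (M L : nat) : ~ op_eq0 r a -> exists T, forall D, (T <= D)%N ->
  forall m k k', (D <= k)%N -> (k < k')%N -> (m + D <= k')%N ->
  ((M * r (m + L)%N)%N)%:Z < `|opv r a k' - opv r a k|.
Proof.
move=> ha.
have [K hK] := mono_op hr hsp ha.
have [Ds hDs] := step_grow hr hsp ha.
have [Dg hDg] := growth hr hsp.
exists (K + Ds + L + M * Dg).+1 => D hD m k k' hk hkk' hk'.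
case: k' hkk' hk' => // p hkp hp.
have hpk : (k <= p)%N by [].
have hstep : `|opv r a p.+1 - opv r a p| <= `|opv r a p.+1 - opv r a k|.
  have hKk : (K <= k)%N by lia.
  move: hpk; rewrite leq_eqVlt => /orP [/eqP ->|hlt]; first by [].
  case: hK => [[_ hm]|[_ hm]].
    have h1 := hm _ _ hKk hlt; have h2 := hm p p.+1 (leq_trans hKk (ltnW hlt)) (ltnSn p).
    rewrite !gtr0_norm ?subr_gt0 //; first by rewrite lerD2l lerN2 ltW.
    exact: lt_trans h1 h2.
  have h1 := hm _ _ hKk hlt; have h2 := hm p p.+1 (leq_trans hKk (ltnW hlt)) (ltnSn p).
  rewrite !ltr0_norm ?subr_lt0 //; first by rewrite lerN2 lerD2l lerN2 ltW.
  exact: lt_trans h2 h1.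
apply: lt_le_trans hstep.
have -> : p = ((p - Ds) + Ds)%N by lia.
apply: le_lt_trans (hDs _); rewrite lez_nat.
have hM : (M <= 2 ^ M)%N by apply: ltnW; apply: ltn_expl.
apply: leq_trans (leq_mul hM (leqnn _)) _.
apply: leq_trans (hDg _ M) _; rewrite r_leE //; lia.
Qed.
End Dom.
Definition upd (z : nat -> nat) (i k : nat) : nat -> nat :=
  fun j => if j == i then k else z j.

Lemma dot_ext r n A z w : (forall i, (i < n)%N -> z i = w i) ->
  dot r n A z = dot r n A w.
Proof. by move=> h; apply: eq_bigr => i _; rewrite h. Qed.

Lemma dot_upd r n A z i k : (i < n)%N ->
  dot r n A (upd z i k) = dot r n A z + (opv r (A i) k - opv r (A i) (z i)).
Proof.
move=> hi; rewrite /dot (bigD1 (Ordinal hi)) //= [in RHS](bigD1 (Ordinal hi)) //= /upd eqxx.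
have -> : \sum_(j < n | j != Ordinal hi) opv r (A j) (if (j : nat) == i then k else z j)
   = \sum_(j < n | j != Ordinal hi) opv r (A j) (z j).
  apply: eq_bigr => j hj.
  by rewrite ifN //; move: hj; apply: contra => /eqP e; apply/eqP; apply: val_inj.
set S := \sum_(_ < n | _) _. ring.
Qed.

Lemma dot_opp r n B z : dot r n (fun i => opp_op (B i)) z = - dot r n B z.
Proof. by rewrite /dot -sumrN; apply: eq_bigr => i _; rewrite opv_opp. Qed.

Lemma chain r (hr : strictly_increasing r) N d D n z : inRnD r N d D n z ->
  forall i i', (i <= i')%N -> (i' < n)%N -> (z i' <= z i)%N.
Proof.
move=> hz i i' hii'; elim: i' hii' => [|i' IH]; first by rewrite leqn0 => /eqP ->.
rewrite leq_eqVlt => /orP [/eqP <- //|hl] hn.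
have [_ h] := hz i' (ltnW hn).
have hne : (i'.+1 == n) = false by apply/negbTE; rewrite neq_ltn hn.
rewrite hne r_leE // in h.
apply: leq_trans (IH hl (ltnW hn)); exact: leq_trans (leq_addr _ _) h.
Qed.

Lemma inRnD_01 r (hr : strictly_increasing r) N d D n z : inRnD r N d D n z -> inRnD r 0 1 D n z.
Proof.
move=> hz i hi; have [_ h] := hz i hi; split; first by exists (z i); rewrite mul1n.
case: ifP h => e; rewrite ?r_leE //; lia.
Qed.

Lemma unif n (P : nat -> nat -> Prop) :
  (forall i, (i < n)%N -> exists T, forall D, (T <= D)%N -> P i D) ->
  exists T, forall D, (T <= D)%N -> forall i, (i < n)%N -> P i D.
Proof.
elim: n => [|n IH] h; first by exists 0%N.
have [T1 h1] := IH (fun i hi => h i (ltnW hi)).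
have [T2 h2] := h n (ltnSn n).
exists (maxn T1 T2) => D hD i; rewrite ltnS leq_eqVlt => /orP [/eqP ->|hi].
  by apply: h2; apply: leq_trans hD; apply: leq_maxr.
by apply: h1 => //; apply: leq_trans hD; apply: leq_maxl.
Qed.
Lemma lex r (hr : strictly_increasing r) (hsp : sparse r) n F :
  (forall i, (i < n)%N -> ~ op_eq0 r (F i)) -> exists T, forall D, (T <= D)%N ->
  forall z w, inRnD r 0 1 D n z -> inRnD r 0 1 D n w ->
  forall j, (j < n)%N -> (forall i, (i < j)%N -> z i = w i) -> (z j < w j)%N ->
  `|dot r n F w - dot r n F z - (opv r (F j) (w j) - opv r (F j) (z j))|
    < `|opv r (F j) (w j) - opv r (F j) (z j)|.
Proof.
move=> hF.
pose C : int := \sum_(i < n) csum (F i).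
pose L : nat := \max_(i < n) size (F i).
pose M : nat := absz (2 * C).
have [T hT] := unif (fun i hi => dom_thr hr hsp M L (hF i hi)).
exists T => D hD z w hz hw j hj hpre hzw.
pose m : nat := if j.+1 == n then 0%N else maxn (z j.+1) (w j.+1).
have hzD : (D <= z j)%N.
  have [_ h] := hz j hj; move: h; rewrite r_leE //; case: ifP => _; lia.
have hmw : (m + D <= w j)%N.
  have [_ h1] := hz j hj; have [_ h2] := hw j hj; move: h1 h2; rewrite /m !r_leE //.
  case: ifP => _; rewrite ?add0n; lia.
have key := hT D hD j hj m (z j) (w j) hzD hzw hmw.
apply: le_lt_trans key.
set g := fun i : nat => opv r (F i) (w i) - opv r (F i) (z i).
have hdiff : dot r n F w - dot r n F z - (opv r (F j) (w j) - opv r (F j) (z j)) = \sum_(j.+1 <= i < n) g i.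
  rewrite /dot -sumrB -(big_mkord xpredT (fun i => g i)).
  rewrite (big_cat_nat (leq0n j.+1) hj) /= big_nat_recr //=.
  rewrite big_nat_cond big1 ?add0r; last first.
    by move=> i /andP [/andP [_ hi] _]; rewrite /g hpre // subrr.
  by rewrite addrAC subrr add0r.
rewrite hdiff.
apply: le_trans (ler_norm_sum _ _ _) _.
pose R : int := (r (m + L)%N)%:Z.
have hR : 0 <= R by [].
apply: (@le_trans _ _ (\sum_(j.+1 <= i < n) (csum (F i) * (2 * R)))).
  rewrite big_nat_cond [X in _ <= X]big_nat_cond; apply: ler_sum => i /andP [/andP [hji hin] _].
  have hjn : (j.+1 == n) = false by apply/negbTE; rewrite neq_ltn; rewrite (leq_ltn_trans hji hin).
  have hsz : (size (F i) <= L)%N by apply: (leq_bigmax (F := fun i : 'I_n => size (F i)) (Ordinal hin)).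
  have hwi : (w i + L <= m + L)%N.
    rewrite leq_add2r /m hjn; apply: leq_trans (leq_maxr _ _); exact: chain hw _ _ hji hin.
  have hzi : (z i + L <= m + L)%N.
    rewrite leq_add2r /m hjn; apply: leq_trans (leq_maxl _ _); exact: chain hz _ _ hji hin.
  rewrite /g; apply: le_trans (ler_normB _ _) _.
  have -> : csum (F i) * (2 * R) = csum (F i) * R + csum (F i) * R by rewrite mulrDl mul1r mulrDr. apply: lerD.
    apply: le_trans (opv_bound hr (w i) hsz) _; rewrite ler_wpM2l ?csum_ge0 // lez_nat r_leE //.
  apply: le_trans (opv_bound hr (z i) hsz) _; rewrite ler_wpM2l ?csum_ge0 // lez_nat r_leE //.
apply: (@le_trans _ _ (\sum_(0 <= i < n) (csum (F i) * (2 * R)))).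
  rewrite (big_cat_nat (leq0n j.+1) hj) /= lerDr; apply: sumr_ge0 => i _.
  by rewrite mulr_ge0 ?csum_ge0 // mulr_ge0.
rewrite big_mkord -mulr_suml -/C PoszM -/R mulrA ler_wpM2r //.
rewrite mulrC /M; exact: ler_norm.
Qed.
Lemma first_diff n (z w : nat -> nat) : (exists i, (i < n)%N /\ z i <> w i) ->
  exists j, [/\ (j < n)%N, z j <> w j & forall i, (i < j)%N -> z i = w i].
Proof.
move=> hex.
have hex' : exists i, (i < n)%N && (z i != w i).
  by case: hex => i [hi hne]; exists i; rewrite hi; apply/eqP.
case: (ex_minnP hex') => j /andP [hj /eqP hne] hmin; exists j; split => //.
move=> i hij; case: (z i =P w i) => // /eqP hne'.
have : (j <= i)%N by apply: hmin; rewrite hne' andbT; exact: ltn_trans hij hj.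
by rewrite leqNgt hij.
Qed.

Lemma lex2 r (hr : strictly_increasing r) (hsp : sparse r) n F :
  (forall i, (i < n)%N -> ~ op_eq0 r (F i)) -> exists T, forall D, (T <= D)%N ->
  forall z w, inRnD r 0 1 D n z -> inRnD r 0 1 D n w ->
  forall j, (j < n)%N -> (forall i, (i < j)%N -> z i = w i) -> z j <> w j ->
  (0 < opv r (F j) (w j) - opv r (F j) (z j) -> dot r n F z < dot r n F w) /\
  (opv r (F j) (w j) - opv r (F j) (z j) < 0 -> dot r n F w < dot r n F z) /\
  opv r (F j) (w j) - opv r (F j) (z j) != 0.
Proof.
move=> hF; have [T hT] := lex hr hsp hF; exists T => D hD z w hz hw j hj hpre hne.
case: (ltngtP (z j) (w j)) => hc; last by [].
- have := hT D hD z w hz hw j hj hpre hc.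
  move: (dot r n F w) (dot r n F z) (opv r (F j) (w j)) (opv r (F j) (z j)) => a b c e h.
  split; [move=> hd; lia | split; [move=> hd; lia| apply/eqP; lia]].
- have hpre' : forall i, (i < j)%N -> w i = z i by move=> i hi; rewrite hpre.
  have := hT D hD w z hw hz j hj hpre' hc.
  move: (dot r n F w) (dot r n F z) (opv r (F j) (w j)) (opv r (F j) (z j)) => a b c e h.
  split; [move=> hd; lia | split; [move=> hd; lia| apply/eqP; lia]].
Qed.
Lemma dotinj_of r (hr : strictly_increasing r) (hsp : sparse r) n F :
  (forall i, (i < n)%N -> ~ op_eq0 r (F i)) -> exists T, forall D, (T <= D)%N -> dot_inj r D n F.
Proof.
move=> hF; have [T hT] := lex2 hr hsp hF; exists T => D hD z w hz hw heq i hi.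
apply/eqP; apply/negPn/negP => hne.
have [j [hj hjne hpre]] : exists j, [/\ (j < n)%N, z j <> w j & forall i, (i < j)%N -> z i = w i].
  by apply: first_diff; exists i; split => //; apply/eqP.
have [h1 [h2 h3]] := hT D hD z w hz hw j hj hpre hjne.
move: h1 h2 h3 heq; move: (dot r n F w) (dot r n F z) (opv r (F j) (w j) - opv r (F j) (z j)) => a b c.
case: (ltrgtP c 0) => hc; rewrite ?hc ?eqxx //; move=> h1 h2 _ e.
  by move: (h2 isT); rewrite e ltxx.
by move: (h1 isT); rewrite e ltxx.
Qed.
Lemma cong_le N d s t k' : (0 < d)%N -> (k' + d = N + d*t)%N -> (N + d*s < N + d*t)%N -> (N + d*s <= k')%N.
Proof. move=> hd e h.
have hst : (s < t)%N by rewrite ltn_add2l ltn_pmul2l in h.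
have : (d * s.+1 <= d * t)%N by rewrite leq_pmul2l.
rewrite mulnS. lia. Qed.

Definition lexprop r D n F := forall z w, inRnD r 0 1 D n z -> inRnD r 0 1 D n w ->
  forall j, (j < n)%N -> (forall i, (i < j)%N -> z i = w i) -> z j <> w j ->
  (0 < opv r (F j) (w j) - opv r (F j) (z j) -> dot r n F z < dot r n F w) /\
  (opv r (F j) (w j) - opv r (F j) (z j) < 0 -> dot r n F w < dot r n F z) /\
  opv r (F j) (w j) - opv r (F j) (z j) != 0.

Definition monoK r K (a : op) :=
  (forall k k', (K <= k)%N -> (k < k')%N -> opv r a k < opv r a k') \/
  (forall k k', (K <= k)%N -> (k < k')%N -> opv r a k' < opv r a k).

Lemma isP_of r (hr : strictly_increasing r) N d D n F (c : int) z z0 (k' : nat) K :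
  (0 < d)%N -> (0 < n)%N -> lexprop r D n F -> (K <= D)%N -> monoK r K (F n.-1) ->
  inRnD r N d D n z -> inRnD r N d D n z0 -> (forall j, j != n.-1 -> z0 j = z j) ->
  z0 n.-1 = k' -> (k' + d = z n.-1)%N ->
  dot r n F z < c -> c <= dot r n F z0 ->
  isP r N d D n F c z.
Proof.
move=> hd hn hlex hKD hmono hz hz0 hz0e hz0k hk' hzc hcz0.
have ez0 : dot r n F z0 = dot r n F (upd z n.-1 k').
  by apply: dot_ext => i _; rewrite /upd; case: eqP => [->//|/eqP ne]; rewrite hz0e.
have hz' : inRnD r N d D n (upd z n.-1 k').
  have eqf : forall j, upd z n.-1 k' j = z0 j.
    by move=> j; rewrite /upd; case: eqP => [->//|/eqP ne]; rewrite hz0e.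
  by move=> i hi; rewrite !eqf; exact: hz0 i hi.
have hcz' : c <= dot r n F (upd z n.-1 k') by rewrite -ez0.
set z' := upd z n.-1 k' in hz' hcz'.
have hn1 : (n.-1 < n)%N by rewrite prednK.
have hz01 := inRnD_01 hr hz; have hz'01 := inRnD_01 hr hz'.
split => //; split; last first.
  by move=> hno; exfalso; apply: hno; exists z.
move=> _; split => // w hw hwc.
have hw01 := inRnD_01 hr hw.
case: (classic (exists i, (i < n)%N /\ z i <> w i)) => [hex|hall]; last first.
  have e : dot r n F z = dot r n F w.
    by apply: dot_ext => i hi; apply: NNPP => hne; apply: hall; exists i; split.
  by rewrite e.
have [j [hj hne hpre]] := first_diff hex.
case: (eqVneq j n.-1) => [ej|hjn].
-
  subst j.
  have ew : dot r n F w = dot r n F z + (opv r (F n.-1) (w n.-1) - opv r (F n.-1) (z n.-1)).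
    rewrite -dot_upd //; apply: dot_ext => i hi; rewrite /upd; case: eqP => [->//|ne].
    apply/esym/hpre; rewrite ltn_neqAle; apply/andP; split; first by apply/eqP.
    by rewrite -ltnS prednK.
  have ez' : dot r n F z' = dot r n F z + (opv r (F n.-1) k' - opv r (F n.-1) (z n.-1)).
    by rewrite /z' dot_upd.
  have hkz : (k' < z n.-1)%N by lia.
  have hKk : (K <= k')%N.
    have [_ h] := hz' n.-1 hn1; move: h; rewrite /z' /upd eqxx r_leE //; case: ifP => _; lia.
  have [[t et] _] := hz n.-1 hn1.
  have [[s es] _] := hw n.-1 hn1.
  case: hmono => hm.
    have := hm _ _ hKk hkz; move: hzc hcz'; rewrite ez'; move=> h1 h2 h3; lia.
  case: (ltngtP (w n.-1) (z n.-1)) => hc.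
  + have hle : (w n.-1 <= k')%N by rewrite es; apply: (cong_le (t := t)) => //; rewrite -?es -?et //; lia.
    have : opv r (F n.-1) k' <= opv r (F n.-1) (w n.-1).
      have hKw : (K <= w n.-1)%N.
        have [_ h] := hw n.-1 hn1; move: h; rewrite r_leE //; case: ifP => _; lia.
      move: hle; rewrite leq_eqVlt => /orP [/eqP ->//|hl]; exact: ltW (hm _ _ hKw hl).
    move: hwc hcz'; rewrite ew ez' => h1 h2 h3; lia.
  + have := hm _ _ (leq_trans hKk (ltnW hkz)) hc; rewrite ew => h; lia.
  + by exfalso; apply: hne.
- have hjlt : (j < n.-1)%N by rewrite ltn_neqAle hjn -ltnS prednK.
  have hpre' : forall i, (i < j)%N -> z' i = w i.
    move=> i hi; rewrite /z' /upd ifN ?hpre //; apply/eqP => e; move: (ltn_trans hi hjlt); lia.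
  have ezj : z' j = z j by rewrite /z' /upd ifN //.
  have hne' : z' j <> w j by rewrite ezj.
  have [h1 [h2 h3]] := hlex z w hz01 hw01 j hj hpre hne.
  have [h1' [h2' _]] := hlex z' w hz'01 hw01 j hj hpre' hne'.
  rewrite ezj in h1' h2'.
  case: (ltrgtP (opv r (F j) (w j) - opv r (F j) (z j)) 0) => hs.
  + exact: ltW (h2 hs).
  + have := h1' hs; lia.
  + by rewrite hs eqxx in h3.
Qed.
Definition cond r n A B (x y1 y2 : int) z := y1 + dot r n A z < x /\ x < y2 + dot r n B z.
Definition condI (r : nat -> nat) N D n (z : nat -> nat) :=
  exists i, (i < n)%N /\ r (z i) = r ((if i.+1 == n then N else z i.+1) + D)%N.
Definition condII (r : nat -> nat) n (u v : nat -> option nat) (z : nat -> nat) :=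
  exists i, (i < n)%N /\ (u i = Some (r (z i)) \/ v i = Some (r (z i))).

Lemma nxt_form r N d D n z i : inRnD r N d D n z -> (i < n)%N ->
  exists s, (if i.+1 == n then N else z i.+1) = (N + d * s)%N.
Proof.
move=> hz hi; case: ifP => e; first by exists 0%N; rewrite muln0 addn0.
have hi1 : (i.+1 < n)%N by rewrite ltn_neqAle e hi.
by have [[s hs] _] := hz _ hi1; exists s.
Qed.

Lemma lbD r (hr : strictly_increasing r) N d D n z i : inRnD r N d D n z -> (i < n)%N ->
  ((if i.+1 == n then N else z i.+1) + D <= z i)%N.
Proof. by move=> hz hi; have [_ h] := hz i hi; move: h; rewrite r_leE. Qed.

Lemma upd_inRnD r (hr : strictly_increasing r) N d D n z i k :
  inRnD r N d D n z -> (i < n)%N -> inRt_idx N d k ->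
  ((if i.+1 == n then N else z i.+1) + D <= k)%N -> ((0 < i)%N -> (k + D <= z i.-1)%N) ->
  inRnD r N d D n (upd z i k).
Proof.
move=> hz hi hk hlo hhi j hj; rewrite /upd.
case: (eqVneq j i) => [->|hji].
  by rewrite (gtn_eqF (ltnSn i)) r_leE.
have [h1 h2] := hz j hj; split => //.
case: (eqVneq j.+1 i) => [e|ne]; last exact: h2.
have hi0 : (0 < i)%N by rewrite -e.
have := hhi hi0; rewrite -e /= => h.
by rewrite e (ltn_eqF hi) r_leE.
Qed.

Lemma box_upd r n (u v : nat -> option nat) z i k :
  (forall j, (j < n)%N -> lbnd (u j) (r (z j)) /\ ubnd (v j) (r (z j))) ->
  lbnd (u i) (r k) -> ubnd (v i) (r k) ->
  forall j, (j < n)%N -> lbnd (u j) (r (upd z i k j)) /\ ubnd (v j) (r (upd z i k j)).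
Proof. by move=> hb hl hu j hj; rewrite /upd; case: eqP => [->//|_]; apply: hb. Qed.

Lemma upd_id (z : nat -> nat) i : upd z i (z i) = z.
Proof. by apply: functional_extensionality => j; rewrite /upd; case: eqP => [->|]. Qed.

Lemma upd_upd (z : nat -> nat) i k k' : upd (upd z i k) i k' = upd z i k'.
Proof. by apply: functional_extensionality => j; rewrite /upd; case: eqP. Qed.

Lemma upd_ne (z : nat -> nat) i k j : j != i -> upd z i k j = z j.
Proof. by move=> h; rewrite /upd (negbTE h). Qed.
Lemma cong_lt N d a b : (0 < d)%N -> (N + d * a < N + d * b)%N -> (N + d * a + d <= N + d * b)%N.
Proof.
move=> hd h; have hst : (a < b)%N by rewrite ltn_add2l ltn_pmul2l in h.
have : (d * a.+1 <= d * b)%N by rewrite leq_pmul2l.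
rewrite mulnS; lia.
Qed.

Lemma move_down r (hr : strictly_increasing r) N d D n A B x y1 y2 u v i z :
  (0 < d)%N -> (d %| D)%N -> (i < n)%N ->
  (forall j, (j < n)%N -> forall e, u j = Some e -> inRt_elt r N d e) ->
  inRnD r N d D n z -> dagger r n A B x y1 y2 u v z ->
  exists k k', inRnD r N d D n (upd z i k) /\ dagger r n A B x y1 y2 u v (upd z i k) /\
   (condI r N D n (upd z i k) \/ condII r n u v (upd z i k) \/
    (inRnD r N d D n (upd z i k') /\ (k' + d = k)%N /\ ~ cond r n A B x y1 y2 (upd z i k'))).
Proof.
move=> hd hdD hi hu hz hdag.
have [[t0 et0] _] := hz i hi.
have [q eq] := dvdnP hdD.
have [hc1 [hc2 hbox]] := hdag.
have hnx : forall k, (if i.+1 == n then N else upd z i k i.+1) = (if i.+1 == n then N else z i.+1).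
  by move=> k; rewrite upd_ne // (gtn_eqF (ltnSn i)).
have [s0 es0] := nxt_form hz hi.
suff: forall t, inRnD r N d D n (upd z i (N + d * t)) ->
    dagger r n A B x y1 y2 u v (upd z i (N + d * t)) -> exists k k',
   inRnD r N d D n (upd z i k) /\ dagger r n A B x y1 y2 u v (upd z i k) /\
   (condI r N D n (upd z i k) \/ condII r n u v (upd z i k) \/
    (inRnD r N d D n (upd z i k') /\ (k' + d = k)%N /\ ~ cond r n A B x y1 y2 (upd z i k'))).
  by move/(_ t0); rewrite -et0 upd_id; apply.
elim=> [|t IH] hP hdP.
  exists (N + d * 0)%N, 0%N; split => //; split => //; left.
  exists i; split => //; rewrite /upd eqxx; congr r.
  have := lbD hr hP hi; rewrite hnx es0 /upd eqxx; lia.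
set k := (N + d * t.+1)%N.
set k' := (N + d * t)%N.
have ekk : (k' + d = k)%N by rewrite /k /k' mulnS; lia.
have hlo := lbD hr hP hi; rewrite hnx /upd eqxx -/(upd z i k) in hlo.
case: (eqVneq k ((if i.+1 == n then N else z i.+1) + D)%N) => [ek|nek].
  exists k, 0%N; split => //; split => //; left.
  exists i; split => //; rewrite hnx /upd eqxx; congr r; exact: ek.
have hlo' : ((if i.+1 == n then N else z i.+1) + D <= k')%N.
  rewrite es0 eq -addnA (mulnC q d) -mulnDr; apply: cong_le hd _ _.
    by rewrite -/k' ekk.
  rewrite mulnDr -(mulnC q d) -eq addnA -es0 ltn_neqAle hlo andbT; by apply/eqP => e; rewrite e eqxx in nek.
have [_ [_ hboxP]] := hdP.
have [hlk hvk] := hboxP i hi; rewrite /upd eqxx -/(upd z i k) in hlk hvk.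
have hlb : lbnd (u i) (r k') \/ u i = Some (r k).
  case eu: (u i) => [e|]; last by left.
  rewrite eu /= in hlk.
  case: (leqP e (r k')) => he; first by left.
  right; have [s es] := hu i hi e eu; congr Some; rewrite es; congr r.
  rewrite es r_leE // in hlk; rewrite es r_ltE // in he.
  apply/eqP; rewrite eqn_leq hlk /=; rewrite leqNgt; apply/negP => hlt.
  have := @cong_le N d s t.+1 k' hd ekk hlt; lia.
case: hlb => [hlb|hub].
- have hP' : inRnD r N d D n (upd z i k').
    apply: upd_inRnD => //; first by exists t.
    move=> hi0; have := lbD hr hP (i:=i.-1) (leq_ltn_trans (leq_pred i) hi).
    rewrite prednK // (ltn_eqF hi) {1}/upd eqxx upd_ne; last by apply/eqP; lia.
    lia.
  have hvb : ubnd (v i) (r k').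
    case ev: (v i) hvk => [b|] //= hb; apply: leq_trans hb; rewrite r_leE //; lia.
  have hbox' := box_upd hbox hlb hvb.
  case: (classic (cond r n A B x y1 y2 (upd z i k'))) => hc.
    by apply: IH => //; case: hc => h1 h2; split => //; split.
  by exists k, k'; split => //; split => //; right; right.
- exists k, 0%N; split => //; split => //; right; left.
  by exists i; split => //; left; rewrite /upd eqxx.
Qed.
Lemma move_up r (hr : strictly_increasing r) N d D n A B x y1 y2 u v i z :
  (0 < d)%N -> (d %| D)%N -> (i < n)%N ->
  (forall j, (j < n)%N -> forall e, v j = Some e -> inRt_elt r N d e) ->
  ((0 < i)%N \/ exists e, v i = Some e) ->
  inRnD r N d D n z -> dagger r n A B x y1 y2 u v z ->
  exists k k', inRnD r N d D n (upd z i k) /\ dagger r n A B x y1 y2 u v (upd z i k) /\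
   (condI r N D n (upd z i k) \/ condII r n u v (upd z i k) \/
    (inRnD r N d D n (upd z i k') /\ (k' = k + d)%N /\ ~ cond r n A B x y1 y2 (upd z i k'))).
Proof.
move=> hd hdD hi hv hpre hz hdag.
have [[t0 et0] _] := hz i hi.
have [q eq] := dvdnP hdD.
have [hc1 [hc2 hbox]] := hdag.
have hnx : forall k, (if i.+1 == n then N else upd z i k i.+1) = (if i.+1 == n then N else z i.+1).
  by move=> k; rewrite upd_ne // (gtn_eqF (ltnSn i)).
have hi1 : (0 < i)%N -> (i.-1 < n)%N by move=> h; lia.
have hupp : (0 < i)%N -> forall k, inRnD r N d D n (upd z i k) -> (k + D <= z i.-1)%N.
  move=> h0 k hk; have := lbD hr hk (hi1 h0).
  rewrite prednK // (ltn_eqF hi) {1}/upd eqxx upd_ne //; apply/eqP; lia.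
pose Mx := if (0 < i)%N then z i.-1 else
  (if v i is Some e then (e : nat) else 0%N).
have hMx : forall k, inRnD r N d D n (upd z i k) -> dagger r n A B x y1 y2 u v (upd z i k) ->
    (k <= Mx)%N.
  move=> k hk [_ [_ hb]]; rewrite /Mx; case: ifP => h0.
    have := hupp h0 k hk; lia.
  have := hb i hi; rewrite /upd eqxx; case: hpre => [h|[e ev]]; first by rewrite h in h0.
  rewrite ev /= => [[_ h]]; exact: leq_trans (r_ge hr k) h.
suff: forall m t, (Mx - (N + d * t) < m)%N -> inRnD r N d D n (upd z i (N + d * t)) ->
    dagger r n A B x y1 y2 u v (upd z i (N + d * t)) -> exists k k',
   inRnD r N d D n (upd z i k) /\ dagger r n A B x y1 y2 u v (upd z i k) /\
   (condI r N D n (upd z i k) \/ condII r n u v (upd z i k) \/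
    (inRnD r N d D n (upd z i k') /\ (k' = k + d)%N /\ ~ cond r n A B x y1 y2 (upd z i k'))).
  by move/(_ (Mx - z i).+1 t0); rewrite -et0 upd_id; apply.
elim=> [//|m IH] t hm hP hdP.
set k := (N + d * t)%N.
set k'' := (N + d * t.+1)%N.
have ekk : (k'' = k + d)%N by rewrite /k /k'' mulnS; lia.
have [_ [_ hboxP]] := hdP.
have [hlk hvk] := hboxP i hi; rewrite /upd eqxx -/(upd z i k) in hlk hvk.
have hupI : (0 < i)%N -> (k + D = z i.-1)%N \/ (k'' + D <= z i.-1)%N.
  move=> h0; have hle := hupp h0 _ hP.
  have [[s1 es1] _] := hz _ (hi1 h0).
  case: (eqVneq (k + D) (z i.-1)) => [e|ne]; [by left|right].
  have ekD : (k + D = N + d * (t + q))%N by rewrite /k eq mulnDr (mulnC q d) addnA.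
  have hlt : (N + d * (t + q) < N + d * s1)%N by rewrite -ekD -es1 ltn_neqAle ne hle.
  have := cong_lt hd hlt; rewrite -ekD -es1 ekk; lia.
have hvI : v i = Some (r k) \/ ubnd (v i) (r k'').
  case ev: (v i) hvk => [e|] /= hvk; last by right.
  have [s es] := hv i hi e ev.
  case: (eqVneq e (r k)) => [->|ne]; [by left|right].
  rewrite es r_leE //; rewrite es r_leE // in hvk.
  rewrite ekk /k; apply: cong_lt hd _; rewrite ltn_neqAle hvk andbT.
  by apply/eqP => e'; rewrite es -e' eqxx in ne.
case: (boolP (0 < i)%N) => h0.
  case: (hupI h0) => [e|hup].
    exists k, 0%N; split => //; split => //; left.
    exists i.-1; split; first exact: hi1.
    rewrite prednK // (ltn_eqF hi) upd_ne; last by apply/eqP; lia.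
    by rewrite /upd eqxx e.
  case: hvI => [ev|hvb].
    exists k, 0%N; split => //; split => //; right; left.
    by exists i; split => //; right; rewrite /upd eqxx.
  have hP' : inRnD r N d D n (upd z i k'').
    apply: upd_inRnD => //; first by exists t.+1.
    have := lbD hr hP hi; rewrite hnx {1}/upd eqxx; lia.
  have hlb : lbnd (u i) (r k'').
    case eu: (u i) hlk => [e|] //= hl; apply: leq_trans hl _; rewrite r_leE //; lia.
  have hbox' := box_upd hbox hlb hvb.
  case: (classic (cond r n A B x y1 y2 (upd z i k''))) => hc.
    have hk'' := hMx _ hP' (conj hc.1 (conj hc.2 hbox')).
    apply: (IH t.+1) => //; last by case: hc => h1 h2; split => //; split.
    rewrite -/k''; lia.
  by exists k, k''; split => //; split => //; right; right.
case: hvI => [ev|hvb].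
  exists k, 0%N; split => //; split => //; right; left.
  by exists i; split => //; right; rewrite /upd eqxx.
have hP' : inRnD r N d D n (upd z i k'').
  apply: upd_inRnD => //; first by exists t.+1.
    have := lbD hr hP hi; rewrite hnx {1}/upd eqxx; lia.
  by move=> h; rewrite h in h0.
have hlb : lbnd (u i) (r k'').
  case eu: (u i) hlk => [e|] //= hl; apply: leq_trans hl _; rewrite r_leE //; lia.
have hbox' := box_upd hbox hlb hvb.
case: (classic (cond r n A B x y1 y2 (upd z i k''))) => hc.
  have hk'' := hMx _ hP' (conj hc.1 (conj hc.2 hbox')).
  apply: (IH t.+1) => //; last by case: hc => h1 h2; split => //; split.
  rewrite -/k''; lia.
by exists k, k''; split => //; split => //; right; right.
Qed.
Definition mspec r K (a : op) := op_eq0 r a \/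
  (op_pos r a /\ forall k k', (K <= k)%N -> (k < k')%N -> opv r a k < opv r a k') \/
  (op_neg r a /\ forall k k', (K <= k)%N -> (k < k')%N -> opv r a k' < opv r a k).

Lemma mspec_ex r (hr : strictly_increasing r) (hsp : sparse r) a :
  exists K, forall K', (K <= K')%N -> mspec r K' a.
Proof.
case: (classic (op_eq0 r a)) => h; first by exists 0%N => K' _; left.
have [K [[hp hm]|[hn hm]]] := mono_op hr hsp h; exists K => K' hK; right.
  by left; split => // k k' hk; apply: hm; exact: leq_trans hK hk.
by right; split => // k k' hk; apply: hm; exact: leq_trans hK hk.
Qed.

Lemma mspec_monoK r K a : ~ op_eq0 r a -> mspec r K a -> monoK r K a.
Proof. by move=> hn [h|[[_ h]|[_ h]]]; [done|left|right]. Qed.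

Lemma monoK_opp r K a : monoK r K a -> monoK r K (opp_op a).
Proof.
case=> h; [right|left] => k k' hk hkk'; rewrite !opv_opp ltrN2; exact: h.
Qed.

Lemma opp_nz r a : ~ op_eq0 r a -> ~ op_eq0 r (opp_op a).
Proof. move=> h h0; apply: h => k; move: (h0 k); rewrite opv_opp => /eqP; rewrite oppr_eq0 => /eqP. done. Qed.

Lemma fam_ok r (hr : strictly_increasing r) (hsp : sparse r) n F : exists T, forall D, (T <= D)%N ->
  (forall i, (i < n)%N -> ~ op_eq0 r (F i)) -> lexprop r D n F /\ dot_inj r D n F.
Proof.
case: (classic (forall i, (i < n)%N -> ~ op_eq0 r (F i))) => h; last first.
  by exists 0%N => D _ h'; exfalso; apply: h.
have [T1 h1] := lex2 hr hsp h; have [T2 h2] := dotinj_of hr hsp h.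
exists (T1 + T2)%N => D hD _; split.
  by apply: h1; lia.
by apply: h2; lia.
Qed.
Lemma finish_down r (hr : strictly_increasing r) N d D n A B x y1 y2 u v i z K :
  (0 < d)%N -> (d %| D)%N -> (i < n)%N -> (K <= D)%N ->
  (forall j, (j < n)%N -> forall e, u j = Some e -> inRt_elt r N d e) ->
  (forall k k', (K <= k')%N -> (k' < k)%N -> opv r (A i) k' <= opv r (A i) k /\ opv r (B i) k <= opv r (B i) k') ->
  inRnD r N d D n z -> dagger r n A B x y1 y2 u v z ->
  exists w, inRnD r N d D n w /\ dagger r n A B x y1 y2 u v w /\ (condI r N D n w \/ condII r n u v w).
Proof.
move=> hd hdD hi hKD hu hm hz hdag.
have [k [k' [hw [hdw [hI|[hII|[hw' [ek hnc]]]]]]]] := move_down hr (A:=A) (B:=B) (x:=x) (y1:=y1) (y2:=y2) (v:=v) hd hdD hi hu hz hdag.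
- by exists (upd z i k); split => //; split => //; left.
- by exists (upd z i k); split => //; split => //; right.
exfalso; apply: hnc.
have hKk : (K <= k')%N.
  have := lbD hr hw' hi; rewrite /upd eqxx; case: ifP => _; lia.
have hlt : (k' < k)%N by lia.
have [h1 h2] := hm k k' hKk hlt.
have [c1 [c2 _]] := hdw.
move: c1 c2; rewrite /cond !dot_upd // => c1 c2; split; lia.
Qed.

Lemma finish_up r (hr : strictly_increasing r) N d D n A B x y1 y2 u v i z K :
  (0 < d)%N -> (d %| D)%N -> (i < n)%N -> (K <= D)%N ->
  (forall j, (j < n)%N -> forall e, v j = Some e -> inRt_elt r N d e) ->
  ((0 < i)%N \/ exists e, v i = Some e) ->
  (forall k k', (K <= k)%N -> (k < k')%N -> opv r (A i) k' <= opv r (A i) k /\ opv r (B i) k <= opv r (B i) k') ->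
  inRnD r N d D n z -> dagger r n A B x y1 y2 u v z ->
  exists w, inRnD r N d D n w /\ dagger r n A B x y1 y2 u v w /\ (condI r N D n w \/ condII r n u v w).
Proof.
move=> hd hdD hi hKD hv hpre hm hz hdag.
have [k [k' [hw [hdw [hI|[hII|[hw' [ek hnc]]]]]]]] := move_up hr (A:=A) (B:=B) (x:=x) (y1:=y1) (y2:=y2) (u:=u) hd hdD hi hv hpre hz hdag.
- by exists (upd z i k); split => //; split => //; left.
- by exists (upd z i k); split => //; split => //; right.
exfalso; apply: hnc.
have hKk : (K <= k)%N.
  have := lbD hr hw hi; rewrite /upd eqxx; case: ifP => _; lia.
have hlt : (k < k')%N by lia.
have [h1 h2] := hm k k' hKk hlt.
have [c1 [c2 _]] := hdw.
move: c1 c2; rewrite /cond !dot_upd // => c1 c2; split; lia.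
Qed.
Unset Implicit Arguments.
Theorem mainTheorem10 (r : nat -> nat) (hr : strictly_increasing r)
  (hcp : congruence_periodic r) (hsp : sparse r)
  (d : nat) (hd : (0 < d)%N) (N : nat) (n : nat) (hn : (0 < n)%N)
  (A B : nat -> op) :
  exists Delta0 : nat, forall Delta : nat, (d %| Delta)%N -> (Delta0 <= Delta)%N ->
  forall (x y1 y2 : int) (u v : nat -> option nat),
    (forall i, (i < n)%N -> forall e, u i = Some e -> inRt_elt r N d e) ->
    (forall i, (i < n)%N -> forall e, v i = Some e -> inRt_elt r N d e) ->
    (exists z, inRnD r N d Delta n z /\ dagger r n A B x y1 y2 u v z) ->
    (v 0%N = None /\
       ((op_eq0 r (A 0%N) /\ op_pos r (B 0%N)) \/ (op_neg r (A 0%N) /\ op_eq0 r (B 0%N))))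
    \/
    (exists z, inRnD r N d Delta n z /\ dagger r n A B x y1 y2 u v z /\
       ((exists i, (i < n)%N /\ r (z i) = r ((if i.+1 == n then N else z i.+1) + Delta)%N)
        \/ (exists i, (i < n)%N /\ (u i = Some (r (z i)) \/ v i = Some (r (z i))))
        \/ ((forall i, (i < n)%N -> ~ op_eq0 r (A i) /\ ~ op_eq0 r (B i)) /\
            dot_inj r Delta n A /\ dot_inj r Delta n (fun i => opp_op (B i)) /\
            (isP r N d Delta n A (x - y1) z \/
             isP r N d Delta n (fun i => opp_op (B i)) (y2 - x) z)))).
Proof.
have [K hK] : exists K, forall D, (K <= D)%N -> forall i, (i < n)%N ->
    mspec r D (A i) /\ mspec r D (B i).
  apply: unif => i hi.
  have [KA hKA] := mspec_ex hr hsp (A i); have [KB hKB] := mspec_ex hr hsp (B i).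
  exists (KA + KB)%N => D hD; split; [apply: hKA|apply: hKB]; lia.
have [TA hTA] := fam_ok hr hsp n A.
have [TB hTB] := fam_ok hr hsp n (fun i => opp_op (B i)).
exists (K + TA + TB)%N => D hdD hD x y1 y2 u v hu hv [z [hz hdag]].
have hKD : (K <= D)%N by lia.
have hmsp := hK D hKD.
case: (classic (exists i, (i < n)%N /\ (op_eq0 r (A i) \/ op_eq0 r (B i)))) => [[i [hi hzero]]|hnz].
- have [mA mB] := hmsp i hi.
  have hdown : (forall k k', (D <= k')%N -> (k' < k)%N ->
      opv r (A i) k' <= opv r (A i) k /\ opv r (B i) k <= opv r (B i) k') ->
      (exists w, inRnD r N d D n w /\ dagger r n A B x y1 y2 u v w /\ (condI r N D n w \/ condII r n u v w)).
    by move=> hm; apply: (finish_down hr hd hdD hi (leqnn D) hu hm hz hdag).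
  have hup : ((0 < i)%N \/ exists e, v i = Some e) -> (forall k k', (D <= k)%N -> (k < k')%N ->
      opv r (A i) k' <= opv r (A i) k /\ opv r (B i) k <= opv r (B i) k') ->
      (exists w, inRnD r N d D n w /\ dagger r n A B x y1 y2 u v w /\ (condI r N D n w \/ condII r n u v w)).
    by move=> hpre hm; apply: (finish_up hr hd hdD hi (leqnn D) hv hpre hm hz hdag).
  suff [[hv0 hc]|hw] : (v 0%N = None /\
       ((op_eq0 r (A 0%N) /\ op_pos r (B 0%N)) \/ (op_neg r (A 0%N) /\ op_eq0 r (B 0%N)))) \/
      (exists w, inRnD r N d D n w /\ dagger r n A B x y1 y2 u v w /\ (condI r N D n w \/ condII r n u v w)).
  + by left.
  + right; have [w [h1 [h2 [h3|h3]]]] := hw; exists w; split => //; split => //.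
      by left.
    by right; left.
  have hupc : op_eq0 r (A i) /\ op_pos r (B i) \/ op_neg r (A i) /\ op_eq0 r (B i) ->
      (forall k k', (D <= k)%N -> (k < k')%N ->
      opv r (A i) k' <= opv r (A i) k /\ opv r (B i) k <= opv r (B i) k') ->
      (v 0%N = None /\
       ((op_eq0 r (A 0%N) /\ op_pos r (B 0%N)) \/ (op_neg r (A 0%N) /\ op_eq0 r (B 0%N)))) \/
      (exists w, inRnD r N d D n w /\ dagger r n A B x y1 y2 u v w /\ (condI r N D n w \/ condII r n u v w)).
    move=> hc hm; case: (posnP i) => [i0|ip]; last by right; apply: hup => //; left.
    subst i; case ev: (v 0%N) => [e|]; last by left.
    by right; apply: hup => //; right; exists e.
  case: hzero => h0.
  + case: mB => [hB0|[[hBp hBm]|[hBn hBm]]].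
    * by right; apply: hdown => k k' _ _; rewrite h0 h0 hB0 hB0.
    * apply: hupc; first by left.
      by move=> k k' hk hkk'; rewrite h0 h0; split => //; apply: ltW; apply: hBm.
    * right; apply: hdown => k k' hk hkk'; rewrite h0 h0; split => //.
      by apply: ltW; apply: hBm.
  + case: mA => [hA0|[[hAp hAm]|[hAn hAm]]].
    * by right; apply: hdown => k k' _ _; rewrite hA0 hA0 h0 h0.
    * right; apply: hdown => k k' hk hkk'; rewrite h0 h0; split => //.
      by apply: ltW; apply: hAm.
    * apply: hupc; first by right.
      by move=> k k' hk hkk'; rewrite h0 h0; split => //; apply: ltW; apply: hAm.
- have hnzA : forall i, (i < n)%N -> ~ op_eq0 r (A i).
    by move=> i hi h; apply: hnz; exists i; split => //; left.
  have hnzB : forall i, (i < n)%N -> ~ op_eq0 r (B i).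
    by move=> i hi h; apply: hnz; exists i; split => //; right.
  have hTAD : (TA <= D)%N by lia.
  have [lexA injA] := hTA D hTAD hnzA.
  have hTBD : (TB <= D)%N by lia.
  have [lexB injB] := hTB D hTBD (fun i hi => opp_nz (hnzB i hi)).
  have hj : (n.-1 < n)%N by rewrite prednK.
  have [k [k' [hw [hdw [hI|[hII|[hw' [ek hnc]]]]]]]] :=
    move_down hr (A:=A) (B:=B) (x:=x) (y1:=y1) (y2:=y2) (v:=v) hd hdD hj hu hz hdag.
  + by right; exists (upd z n.-1 k); split => //; split => //; left.
  + by right; exists (upd z n.-1 k); split => //; split => //; right; left.
  right; exists (upd z n.-1 k); split => //; split => //; right; right.
  split; first by move=> i hi; split; [apply: hnzA|apply: hnzB].
  split => //; split => //.
  have [c1 [c2 _]] := hdw.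
  have hne : forall j, j != n.-1 -> upd z n.-1 k' j = upd z n.-1 k j.
    by move=> j hjn; rewrite !upd_ne.
  have ekk : upd z n.-1 k' n.-1 = k' by rewrite /upd eqxx.
  have ekk2 : (k' + d = upd z n.-1 k n.-1)%N by rewrite /upd eqxx.
  case: (classic (y1 + dot r n A (upd z n.-1 k') < x)) => ha.
  + have hb : ~ (x < y2 + dot r n B (upd z n.-1 k')) by move=> hb; apply: hnc; split.
    right; apply: (isP_of hr hd hn lexB (leqnn D) _ hw hw' hne ekk ekk2).
    * exact: monoK_opp (mspec_monoK (hnzB _ hj) (hmsp _ hj).2).
    * rewrite dot_opp; lia.
    * rewrite dot_opp; lia.
  + left; apply: (isP_of hr hd hn lexA (leqnn D) _ hw hw' hne ekk ekk2).
    * exact: mspec_monoK (hnzA _ hj) (hmsp _ hj).1.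
    * lia.
    * lia.
Qed.
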